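(* Let $d\geq1$, $L\geq0$ be integers and $r=\binom{d+L}{d}$. Let $\mathcal{H}_{d,L}\subseteq\mathrm{L}^2(\mathbb{C}^d,\mathbb{C})$ be the span of the functions \[ \sqrt{C^L_{\alpha_1,\ldots,\alpha_d}}\,\frac{z_1^{\alpha_1}\cdots z_d^{\alpha_d}}{(1+\|z\|^2)^{\frac{d+L+1}{2}}},\qquad \alpha_1+\cdots+\alpha_d\leq L,\quad C^L_{\alpha_1,\ldots,\alpha_d}=\frac{1}{\pi^d}\frac{(d+L)!}{\alpha_1!\cdots\alpha_d!\,(L-(\alpha_1+\cdots+\alpha_d))!}, \] an $r$-dimensional subspace (with Lebesgue measure on $\mathbb{C}^d$) whose reproducing kernel is $K(z,w)=\frac{r\,d!}{\pi^d}\frac{(1+\langle z,w\rangle)^L}{(1+\|z\|^2)^{\frac{d+L+1}{2}}(1+\|w\|^2)^{\frac{d+L+1}{2}}}$. Let $\psi_d:\mathbb{C}^d\to\mathbb{P}(\mathbb{C}^{d+1})$, $\psi_d(z)=(1,z)$, and let $\mathcal{H}_*=\{g\circ\psi_d^{-1}\sqrt{|\mathrm{Jac}(\psi_d^{-1})|}: g\in\mathcal{H}_{d,L}\}\subseteq\mathrm{L}^2(\mathbb{P}(\mathbb{C}^{d+1}),\mathbb{C})$ (functions defined almost everywhere). Then the projection determinantal point process of $r$ points in $\mathbb{P}(\mathbb{C}^{d+1})$ associated with $\mathcal{H}_*$ (the pushforward under $\psi_d$ of the determinantal point process associated with $\mathcal{H}_{d,L}$) has kernel $K_*^{(r,d)}$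 satisfying \[ \left|K_*^{(r,d)}(p,q)\right|=\frac{r\,d!}{\pi^d}\left|\left\langle\frac{p}{\|p\|},\frac{q}{\|q\|}\right\rangle\right|^L . \] This process is called the projective ensemble.
   Context: $\mathbb{P}(\mathbb{C}^{d+1})$ carries the Fubini–Study metric normalized so that the distance satisfies $\sin d_{\mathbb{P}}(p,q)=\sqrt{1-\frac{|\langle p,q\rangle|^2}{\|p\|^2\|q\|^2}}$ (total volume $\pi^d/d!$), and its Riemannian volume measure; $\mathrm{Jac}$ denotes the Jacobian determinant. For a finite-dimensional subspace $H$ of $\mathrm{L}^2$ with orthonormal basis $\varphi_1,\ldots,\varphi_n$, its reproducing kernel is $K_H(x,y)=\sum_i\varphi_i(x)\overline{\varphi_i(y)}$, and the associated projection determinantal point process is the process of $n$ points with $k$-point joint intensities $\det(K_H(x_i,x_j))_{i,j=1}^k$ with respect to the underlying measure. *)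

(* Defs.v *)
From HB Require Import structures.
From mathcomp Require Import all_boot all_order all_algebra.
From mathcomp Require Import all_classical all_reals.
From mathcomp Require Import topology normedtype trigo.
From mathcomp Require Import complex.

Set Implicit Arguments.
Unset Strict Implicit.
Unset Printing Implicit Defensive.

Import Order.TTheory GRing.Theory Num.Theory.
Import numFieldTopology.Exports numFieldNormedType.Exports.
Local Open Scope classical_set_scope.
Local Open Scope ring_scope.
Local Open Scope complex_scope.

Section ProjEnsemble.
Variable R : realType.
Local Notation C := (R[i]).

Definition cvec (n : nat) := 'I_n -> C.

Definition cabs (z : C) : R := Num.sqrt (complex.Re z ^+ 2 + complex.Im z ^+ 2).

Definition cinner n (p q : cvec n) : C := \sum_(i < n) p i * conjc (q i).

Definition cnorm n (p : cvec n) : R := Num.sqrt (\sum_(i < n) cabs (p i) ^+ 2).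

Definition cscale n (a : C) (p : cvec n) : cvec n := fun i => a * p i.
Definition cadd n (p q : cvec n) : cvec n := fun i => p i + q i.

(** Fubini--Study distance on P(C^{d+1}) (points represented by nonzero
    vectors): sin d(p,q) = sqrt(1 - |<p,q>|^2/(||p||^2 ||q||^2)), d in [0,pi/2]. *)
Definition dFS n (p q : cvec n) : R :=
  asin (Num.sqrt (1 - cabs (cinner p q) ^+ 2 / (cnorm p ^+ 2 * cnorm q ^+ 2))).

Definition psi d (z : cvec d) : cvec d.+1 :=
  fun i => if unlift ord0 i is Some j then z j else 1.
Definition psiinv d (p : cvec d.+1) : cvec d :=
  fun j => p (lift ord0 j) / p ord0.

(** Fubini--Study Riemannian metric pulled back by psi_d:
    g_z(v) = lim_{t -> 0} (d(psi z, psi (z + t v)) / t)^2 *)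
Definition fs_quad d (z v : cvec d) : R :=
  lim ((fun t : R => (dFS (psi z) (psi (cadd z (cscale t%:C v))) / t) ^+ 2) @ (0 : R)^').

(** standard real basis of C^d = R^{2d}: e_1,..,e_d, i e_1,..,i e_d *)
Definition rbasis d (k : 'I_(d + d)) : cvec d :=
  fun j => match fintype.split k with
           | inl a => if j == a then 1 else 0
           | inr a => if j == a then 'i else 0
           end.

(** Gram matrix of the metric in real coordinates (polarization) *)
Definition fs_gram d (z : cvec d) : 'M[R]_(d + d) :=
  \matrix_(a, b) ((fs_quad z (cadd (rbasis a) (rbasis b))
                  - fs_quad z (cadd (rbasis a) (cscale (-1) (rbasis b)))) / 4).

(** Jacobian of psi_d : (C^d, Lebesgue) -> (P(C^{d+1}), vol_FS):
    the Riemannian volume density sqrt(det g) in the chart *)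
Definition jac_psi d (z : cvec d) : R := Num.sqrt (\det (fs_gram z)).

Definition jac_psiinv d (p : cvec d.+1) : R := (jac_psi (psiinv p))^-1.

Definition mindex d L := {ffun 'I_d -> 'I_L.+1}.
Definition msize d L (a : mindex d L) : nat := \sum_(i < d) (a i : nat).

Definition Ccoef d L (a : mindex d L) : R :=
  (d + L)`!%:R / (pi ^+ d * (\prod_(i < d) (a i)`!)%:R * (L - msize a)`!%:R).

Definition phi d L (a : mindex d L) (z : cvec d) : C :=
  (Num.sqrt (Ccoef a))%:C * (\prod_(i < d) z i ^+ a i)
  / (Num.sqrt ((1 + cnorm z ^+ 2) ^+ (d + L + 1)))%:C.

Definition phistar d L (a : mindex d L) (p : cvec d.+1) : C :=
  phi a (psiinv p) * (Num.sqrt `|jac_psiinv p|)%:C.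

Definition Kstar d L (p q : cvec d.+1) : C :=
  \sum_(a : mindex d L | (msize a <= L)%N) phistar a p * conjc (phistar a q).

End ProjEnsemble.

(* Main.v *)
Require Import Defs.
From HB Require Import structures.
From mathcomp Require Import all_boot all_order all_algebra.
From mathcomp Require Import all_classical all_reals.
From mathcomp Require Import topology normedtype trigo derive realfun.
From mathcomp Require Import complex.
From mathcomp Require Import ring lra.
Import Order.TTheory GRing.Theory Num.Theory.
Import numFieldTopology.Exports numFieldNormedType.Exports.
Local Open Scope ring_scope.
Local Open Scope complex_scope.

Section Basic.
Context {R : realType}.
Local Notation C := (R[i]).

Lemma cabsC (x : C) : (cabs x)%:C = `|x|. Proof. by rewrite normc_def. Qed.
Lemma cabs_ge0 (x : C) : 0 <= cabs x. Proof. exact: sqrtr_ge0. Qed.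
Lemma RCX (x : R) n : (x ^+ n)%:C = (x%:C) ^+ n :> C. Proof. by rewrite rmorphXn. Qed.
Lemma RCM (x y : R) : (x * y)%:C = x%:C * y%:C :> C. Proof. by rewrite rmorphM. Qed.
Lemma RCD (x y : R) : (x + y)%:C = x%:C + y%:C :> C. Proof. by rewrite rmorphD. Qed.
Lemma RCB (x y : R) : (x - y)%:C = x%:C - y%:C :> C. Proof. by rewrite rmorphB. Qed.
Lemma RCN (x : R) : (- x)%:C = - x%:C :> C. Proof. by rewrite rmorphN. Qed.
Lemma RCV (x : R) : (x^-1)%:C = (x%:C)^-1 :> C. Proof. by rewrite fmorphV. Qed.
Lemma RC1 : (1 : R)%:C = 1 :> C. Proof. by []. Qed.
Lemma RC0 : (0 : R)%:C = 0 :> C. Proof. by []. Qed.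
Lemma RCn n : (n%:R : R)%:C = n%:R :> C. Proof. by rewrite rmorph_nat. Qed.
Lemma conjRC (x : R) : conjc (x%:C) = x%:C. Proof. exact: conjc_real. Qed.
Lemma conjcM (x y : C) : conjc (x * y) = conjc x * conjc y. Proof. exact: rmorphM. Qed.
Lemma conjcD (x y : C) : conjc (x + y) = conjc x + conjc y. Proof. exact: rmorphD. Qed.
Lemma conjcB (x y : C) : conjc (x - y) = conjc x - conjc y. Proof. exact: rmorphB. Qed.
Lemma conjcX (x : C) n : conjc (x ^+ n) = conjc x ^+ n. Proof. exact: rmorphXn. Qed.
Lemma conjcV (x : C) : conjc (x^-1) = (conjc x)^-1. Proof. exact: fmorphV. Qed.
Lemma conjc_sum (I : finType) (P : pred I) (F : I -> C) :
  conjc (\sum_(i | P i) F i) = \sum_(i | P i) conjc (F i). Proof. exact: rmorph_sum. Qed.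
Lemma conjc_prod (I : finType) (P : pred I) (F : I -> C) :
  conjc (\prod_(i | P i) F i) = \prod_(i | P i) conjc (F i). Proof. exact: rmorph_prod. Qed.
Lemma RC_sum (I : finType) (P : pred I) (F : I -> R) :
  (\sum_(i | P i) F i)%:C = \sum_(i | P i) (F i)%:C :> C. Proof. exact: rmorph_sum. Qed.
Lemma RC_prod (I : finType) (P : pred I) (F : I -> R) :
  (\prod_(i | P i) F i)%:C = \prod_(i | P i) (F i)%:C :> C. Proof. exact: rmorph_prod. Qed.
Lemma cabs2C (x : C) : (cabs x ^+ 2)%:C = x * conjc x.
Proof. by rewrite RCX cabsC normCK. Qed.
Lemma cabsM (x y : C) : cabs (x * y) = cabs x * cabs y.
Proof. by apply: complexI; rewrite RCM !cabsC normrM. Qed.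
Lemma cabsX (x : C) n : cabs (x ^+ n) = cabs x ^+ n.
Proof. by apply: complexI; rewrite RCX !cabsC normrX. Qed.
Lemma cabs0 : cabs (0 : C) = 0.
Proof. by apply: complexI; rewrite cabsC normr0. Qed.
Lemma cabsR (x : R) : 0 <= x -> cabs x%:C = x.
Proof. by move=> hx; apply: complexI; rewrite cabsC ger0_norm // ler0c. Qed.
Lemma cabsJ (x : C) : cabs (conjc x) = cabs x.
Proof. by case: x => a b; rewrite /cabs /= sqrrN. Qed.

Lemma cnorm2 n (p : cvec R n) : cnorm p ^+ 2 = \sum_i cabs (p i) ^+ 2.
Proof. by rewrite sqr_sqrtr // sumr_ge0 // => i _; rewrite sqr_ge0. Qed.
Lemma cnorm2C n (p : cvec R n) : (cnorm p ^+ 2)%:C = cinner p p.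
Proof. by rewrite cnorm2 RC_sum; apply: eq_bigr => i _; exact: cabs2C. Qed.
Lemma cnorm_ge0 n (p : cvec R n) : 0 <= cnorm p. Proof. exact: sqrtr_ge0. Qed.

Lemma cinnerC n (u w : cvec R n) : cinner w u = conjc (cinner u w).
Proof.
rewrite /cinner conjc_sum; apply: eq_bigr => i _.
by rewrite conjcM conjcK mulrC.
Qed.
Lemma cinnerDl n (u v w : cvec R n) : cinner (cadd u v) w = cinner u w + cinner v w.
Proof. by rewrite /cinner -big_split; apply: eq_bigr => i _; rewrite /cadd mulrDl. Qed.
Lemma cinnerDr n (u v w : cvec R n) : cinner w (cadd u v) = cinner w u + cinner w v.
Proof. by rewrite /cinner -big_split; apply: eq_bigr => i _; rewrite /cadd conjcD mulrDr. Qed.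
Lemma cinnerZl n a (u w : cvec R n) : cinner (cscale a u) w = a * cinner u w.
Proof. by rewrite /cinner mulr_sumr; apply: eq_bigr => i _; rewrite /cscale mulrA. Qed.
Lemma cinnerZr n a (u w : cvec R n) : cinner w (cscale a u) = conjc a * cinner w u.
Proof.
rewrite /cinner mulr_sumr; apply: eq_bigr => i _; rewrite /cscale conjcM.
by rewrite mulrCA.
Qed.
Lemma cinner_psi d (a b : cvec R d) : cinner (psi a) (psi b) = 1 + cinner a b.
Proof.
rewrite /cinner big_ord_recl /psi unlift_none conjc1 mulr1; congr (_ + _).
by apply: eq_bigr => i _; rewrite liftK.
Qed.
Lemma cnorm2_psi d (a : cvec R d) : cnorm (psi a) ^+ 2 = 1 + cnorm a ^+ 2.
Proof. by apply: complexI; rewrite RCD !cnorm2C cinner_psi. Qed.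

End Basic.

Section CS.
Context {R : realType}.
Local Notation C := (R[i]).

Lemma conjcN (x : C) : conjc (- x) = - conjc x. Proof. exact: rmorphN. Qed.

Lemma cnorm_eq0 n (v : cvec R n) : cnorm v ^+ 2 = 0 -> forall i, v i = 0.
Proof.
rewrite cnorm2 => h i.
have := psumr_eq0P (P := predT) (fun j _ => sqr_ge0 (cabs (v j))) h (i := i) isT.
move/eqP; rewrite sqrf_eq0 => /eqP h0.
by apply/eqP; rewrite -normr_eq0 -cabsC h0.
Qed.

Lemma cauchy_schwarz n (u v : cvec R n) :
  cabs (cinner u v) ^+ 2 <= cnorm u ^+ 2 * cnorm v ^+ 2.
Proof.
set a := cnorm v ^+ 2; set b := cinner u v.
have ha : 0 <= a by rewrite sqr_ge0.
pose w := cadd (cscale a%:C u) (cscale (- b) v).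
have key : cnorm w ^+ 2 = a * (a * cnorm u ^+ 2 - cabs b ^+ 2).
  apply: complexI; rewrite cnorm2C RCM RCB RCM cabs2C.
  rewrite /w cinnerDl !cinnerDr !cinnerZl !cinnerZr.
  rewrite [cinner v u]cinnerC -/b -!cnorm2C -/a conjRC conjcN.
  ring.
rewrite le_eqVlt in ha; case/orP: ha => [/eqP a0 | apos].
  have v0 := @cnorm_eq0 n v (esym a0).
  have -> : b = 0.
    by rewrite /b /cinner big1 // => i _; rewrite v0 conjc0 mulr0.
  by rewrite -a0 mulr0 cabs0 expr0n.
have : 0 <= a * (a * cnorm u ^+ 2 - cabs b ^+ 2) by rewrite -key sqr_ge0.
rewrite pmulr_rge0 // subr_ge0 => h.
by rewrite mulrC.
Qed.
End CS.

Section Asin.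
Local Open Scope classical_set_scope.
Context {R : realType}.

Definition ainv (x : R) := if x == 0 then 1 else asin x / x.

Lemma asin0 : asin (0 : R) = 0.
Proof.
rewrite -{1}(sin0 R) sinK // in_itv /= oppr_le0 divr_ge0 ?pi_ge0 //.
Qed.

Lemma asinE (x : R) : asin x = ainv x * x.
Proof.
rewrite /ainv; case: eqP => [->|/eqP x0]; first by rewrite asin0 mulr0.
by rewrite divfK.
Qed.

Lemma ainv_cont : {for 0, continuous ainv}.
Proof.
apply/continuous_withinNx.
have hd : is_derive (0:R) 1 asin (Num.sqrt (1 - 0 ^+ 2))^-1.
  by apply: is_derive1_asin; rewrite ltrN10 ltr01.
have X : derivable (@asin R) 0 1 := @ex_derive _ _ _ _ _ _ _ hd.
have E := @derive_val _ _ _ _ _ _ _ hd.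
rewrite /derive in E; rewrite /derivable E in X.
rewrite expr0n /= subr0 sqrtr1 invr1 in X.
rewrite {2}/ainv eqxx.
apply: cvg_trans X; apply: near_eq_cvg; near=> h.
rewrite /ainv ifF; last by apply/negbTE; near: h; exact: nbhs_dnbhs_neq.
by rewrite /= addr0 scaler1 asin0 subr0 mulrC.
Unshelve. all: by end_near.
Qed.
End Asin.

Section Quad.
Context {R : realType}.
Local Notation C := (R[i]).
Local Open Scope classical_set_scope.

Lemma c_id : (t @[t --> (0:R)^']) --> (0:R).
Proof. exact: cvg_within. Qed.
Lemma c_poly (a b c : R) : (a + t * b + t ^+ 2 * c) @[t --> (0:R)^'] --> a.
Proof.
have h : (a + t * b + t ^+ 2 * c) @[t --> (0:R)^'] --> a + 0 * b + 0 ^+ 2 * c.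
  apply: cvgD; first apply: cvgD.
  - exact: cvg_cst.
  - apply: cvgMl; exact: c_id.
  - apply: cvgMl; rewrite expr2; apply: cvgM; exact: c_id.
by rewrite mul0r expr0n /= mul0r !addr0 in h.
Qed.

Lemma fs_quadE d (z v : cvec R d) :
  fs_quad z v = ((1 + cnorm z ^+ 2) * cnorm v ^+ 2 - cabs (cinner z v) ^+ 2)
                / (1 + cnorm z ^+ 2) ^+ 2.
Proof.
set A := 1 + cnorm z ^+ 2.
set nv := cnorm v ^+ 2.
set B := cinner z v.
set G := A * nv - cabs B ^+ 2.
have A1 : 1 <= A by rewrite lerDl sqr_ge0.
have A0 : 0 < A by apply: lt_le_trans A1.
have nv0 : 0 <= nv by rewrite sqr_ge0.
have G0 : 0 <= G.
  rewrite subr_ge0 (le_trans (@cauchy_schwarz R d z v)) //.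
  by rewrite ler_wpM2r // lerDr.
pose a t := cadd z (cscale t%:C v).
pose nQ t := 1 + cnorm (a t) ^+ 2.
pose beta := 2 * complex.Re B.
have hb : beta%:C = B + conjc B by rewrite addcJ /beta RCM (RCn 2).
have zzr : conjc (cinner z z) = cinner z z by rewrite -cnorm2C conjRC.
have nQE t : nQ t = A + t * beta + t ^+ 2 * nv.
  apply: complexI; rewrite /nQ /A !RCD (RCM t beta) (RCM (t ^+ 2)) RC1 hb !cnorm2C RCX.
  rewrite /a cinnerDl !cinnerDr !cinnerZl !cinnerZr conjRC.
  rewrite [cinner v z]cinnerC -/B.
  ring.
have nQ1 t : 1 <= nQ t by rewrite lerDl sqr_ge0.
have nQ0 t : 0 < nQ t by apply: lt_le_trans (nQ1 t).
have kE t : A * nQ t - cabs (cinner (psi z) (psi (a t))) ^+ 2 = t ^+ 2 * G.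
  apply: complexI; rewrite RCB RCM cabs2C RCM RCX /G RCB RCM cabs2C.
  rewrite /nQ /A !RCD RC1 !cnorm2C cinner_psi conjcD conjc1.
  rewrite /a !cinnerDr !cinnerZr !cinnerDl !cinnerZl conjRC.
  rewrite [cinner v z]cinnerC -/B conjcD conjcM conjRC zzr.
  ring.
pose m t := G / (A * nQ t).
have m0 t : 0 <= m t by rewrite divr_ge0 // mulr_ge0 // ltW.
have dFSE t : dFS (psi z) (psi (a t)) = asin (Num.sqrt (t ^+ 2 * m t)).
  rewrite /dFS !cnorm2_psi -/A; congr (asin (Num.sqrt _)).
  rewrite -/(nQ t) /m mulrA -kE mulrBl divff //.
  by rewrite mulf_neq0 // gt_eqF.
pose s t := Num.sqrt (t ^+ 2 * m t).
have sq t : s t ^+ 2 = t ^+ 2 * m t by rewrite sqr_sqrtr // mulr_ge0 // sqr_ge0.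
rewrite /fs_quad; apply: norm_cvg_lim.
have cnQ : nQ t @[t --> (0:R)^'] --> A.
  apply: cvg_trans (c_poly A beta nv); apply: near_eq_cvg; near=> t.
  by rewrite nQE.
have cm : m t @[t --> (0:R)^'] --> G / (A * A).
  rewrite /m; apply: cvgMr; apply: cvgV; first by rewrite mulf_neq0 // gt_eqF.
  by apply: cvgMr.
have cs : s t @[t --> (0:R)^'] --> 0.
  have h : (t ^+ 2 * m t) @[t --> (0:R)^'] --> 0 ^+ 2 * (G / (A * A)).
    by apply: cvgM => //; rewrite expr2; apply: cvgM; exact: c_id.
  rewrite expr0n /= mul0r in h.
  have := continuous_cvg _ (@sqrt_continuous R 0) h.
  rewrite sqrtr0; apply; exact: _.
have ca : ainv (s t) @[t --> (0:R)^'] --> (1:R).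
  have := continuous_cvg _ (@ainv_cont R) cs.
  rewrite {2}/ainv eqxx; apply; exact: _.
have cf : (ainv (s t) ^+ 2 * m t) @[t --> (0:R)^'] --> 1 ^+ 2 * (G / (A * A)).
  by apply: cvgM => //; rewrite expr2; apply: cvgM.
rewrite expr1n mul1r in cf.
have -> : G / A ^+ 2 = G / (A * A) by rewrite expr2.
apply: cvg_trans cf; apply: near_eq_cvg; near=> t.
have t0 : t != 0 by near: t; exact: nbhs_dnbhs_neq.
rewrite /= dFSE -/(s t) asinE.
rewrite expr_div_n exprMn sq.
by field.
Unshelve. all: by end_near.
Qed.
End Quad.

Lemma det_rank2 (F : fieldType) N (Y : 'M[F]_(N, 2)) (s r : F) :
  s != 0 -> Y^T *m Y = r%:M ->
  \det (s%:M - Y *m Y^T) = s ^+ N * (1 - s^-1 * r) ^+ 2.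
Proof.
move=> s0 hY.
pose M := block_mx (s%:M : 'M_N) Y (Y^T) (1%:M : 'M_2).
have E1 : M = block_mx 1%:M Y 0 1%:M *m block_mx (s%:M - Y *m Y^T) 0 (Y^T) 1%:M.
  rewrite mulmx_block !mul1mx !mulmx1 ?mul0mx ?mulmx0 ?addr0 ?add0r.
  by rewrite subrK.
have E2 : M = block_mx (s%:M) 0 (Y^T) 1%:M *m
              block_mx 1%:M (s^-1 *: Y) 0 (1%:M - s^-1 *: (Y^T *m Y)).
  rewrite mulmx_block !mul1mx !mulmx1 ?mul0mx ?mulmx0 ?addr0 ?add0r.
  rewrite mul_scalar_mx scalerA mulfV // scale1r -scalemxAr.
  by rewrite addrC subrK.
have := congr1 determinant E1; rewrite {1}E2 !det_mulmx.
rewrite det_ublock det_lblock det_ublock det_lblock !det1 !mul1r mulr1.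
rewrite hY mulr1 scale_scalar_mx.
have -> : (1%:M - (s^-1 * r)%:M : 'M[F]_2) = (1 - s^-1 * r)%:M by rewrite raddfB.
rewrite !det_scalar.
by move=> <-.
Qed.

Lemma powB (F : fieldType) (x : F) n : x != 0 ->
  ((x^+2)^-1)^+(n+n) * (x^+(n+n) * (x^-1)^+2) = ((x^+n.+1)^-1)^+2.
Proof.
have [B ->] : exists B, x = B^-1 by exists x^-1; rewrite invrK.
rewrite invr_eq0 => hB.
rewrite -!exprVn !invrK -!exprM.
rewrite mul2n exprVn -addnn exprD -mulrA mulVKf ?expf_neq0 // -exprD.
congr (_ ^+ _); by rewrite muln2 -addnn addn2 addSn addnS.
Qed.

Section Gram.
Context {R : realType}.
Local Notation C := (R[i]).

Definition ix d (k : 'I_(d + d)) : 'I_d :=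
  match fintype.split k with inl a => a | inr a => a end.
Definition un d (k : 'I_(d + d)) : C :=
  match fintype.split k with inl _ => 1 | inr _ => 'i end.
Arguments ix {d}. Arguments un {d}.

Lemma rbasisE d (k : 'I_(d + d)) j : rbasis R k j = (j == ix k)%:R * un k :> C.
Proof.
rewrite /rbasis /ix /un; case: (fintype.split k) => a; case: eqP => _;
  by rewrite ?mul1r ?mul0r.
Qed.

Lemma cinner_rbasis d (w : cvec R d) k : cinner w (rbasis R k) = w (ix k) * conjc (un k).
Proof.
rewrite /cinner (bigD1 (ix k)) //= rbasisE eqxx mul1r big1 ?addr0 // => j hj.
by rewrite rbasisE (negbTE hj) mul0r conjc0 mulr0.
Qed.

Lemma Re_rbasis d (a b : 'I_(d + d)) :
  complex.Re (cinner (rbasis R a) (rbasis R b)) = (a == b)%:R.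
Proof.
rewrite cinner_rbasis rbasisE.
rewrite -[a]splitK -[b]splitK /ix /un !unsplitK.
case: (fintype.split a) => a'; case: (fintype.split b) => b' /=.
- rewrite (inj_eq (@lshift_inj _ _)) eq_sym.
  by case: eqP => _ /=; simpc.
- have -> : (lshift d a' == rshift d b') = false.
    by apply/eqP => /(congr1 val) /= h; move: (ltn_ord a'); rewrite h ltnNge leq_addr.
  by case: eqP => _ /=; simpc.
- have -> : (rshift d a' == lshift d b') = false.
    by apply/eqP => /(congr1 val) /= h; move: (ltn_ord b'); rewrite -h ltnNge leq_addr.
  by case: eqP => _ /=; simpc.
- rewrite (inj_eq (@rshift_inj _ _)) eq_sym.
  by case: eqP => _ /=; simpc.
Qed.
Definition Ymx d (z : cvec R d) : 'M[R]_(d + d, 2) :=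
  \matrix_(a, k) (if k == ord0 then complex.Re (cinner z (rbasis R a))
                  else complex.Im (cinner z (rbasis R a))).
Arguments Ymx {d}.

Lemma polar1 {n} (u w : cvec R n) :
  cnorm (cadd u w) ^+ 2 - cnorm (cadd u (cscale (-1) w)) ^+ 2
  = 4 * complex.Re (cinner u w).
Proof.
apply: complexI; rewrite RCB !cnorm2C RCM (RCn 4).
rewrite !cinnerDl !cinnerDr !cinnerZl !cinnerZr conjcN conjc1.
rewrite [cinner w u]cinnerC.
have -> : (complex.Re (cinner u w))%:C = (cinner u w + conjc (cinner u w)) / 2%:R.
  by rewrite ReJ_add.
by field.
Qed.

Lemma polar2 (x y : C) :
  cabs (x + y) ^+ 2 - cabs (x - y) ^+ 2
  = 4 * (complex.Re x * complex.Re y + complex.Im x * complex.Im y).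
Proof.
case: x => a b; case: y => c e; rewrite /cabs /= !sqr_sqrtr ?addr_ge0 ?sqr_ge0 //.
ring.
Qed.

Lemma gram_alg {A np nm cp cm del P : R} : A != 0 ->
  np - nm = 4 * del -> cp - cm = 4 * P ->
  ((A * np - cp) / A ^+ 2 - (A * nm - cm) / A ^+ 2) / 4
  = (A ^+ 2)^-1 * (A * del - P).
Proof.
move=> hA h1 h2.
have -> : np = nm + 4 * del by rewrite -h1 addrC subrK.
have -> : cp = cm + 4 * P by rewrite -h2 addrC subrK.
by field.
Qed.

Lemma fs_gramE d (z : cvec R d) : fs_gram z =
  ((1 + cnorm z ^+ 2) ^+ 2)^-1 *: ((1 + cnorm z ^+ 2)%:M - Ymx z *m (Ymx z)^T).
Proof.
apply/matrixP => a b; rewrite !mxE !fs_quadE.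
rewrite !cinnerDr cinnerZr conjcN conjc1 mulN1r.
have h1 := polar1 (rbasis R a) (rbasis R b); rewrite Re_rbasis in h1.
have h2 := polar2 (cinner z (rbasis R a)) (cinner z (rbasis R b)).
rewrite (gram_alg _ h1 h2); last by rewrite gt_eqF // ltr_pwDl // sqr_ge0.
congr (_ * (_ - _)); first by rewrite mulr_natr.
rewrite !big_ord_recl big_ord0 addr0 !mxE /=.
done.
Qed.

Lemma ix_l d (j : 'I_d) : ix (lshift d j) = j.
Proof. by rewrite /ix (unsplitK (inl j)). Qed.
Lemma ix_r d (j : 'I_d) : ix (rshift d j) = j.
Proof. by rewrite /ix (unsplitK (inr j)). Qed.
Lemma un_l d (j : 'I_d) : un (lshift d j) = 1.
Proof. by rewrite /un (unsplitK (inl j)). Qed.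
Lemma un_r d (j : 'I_d) : un (rshift d j) = 'i.
Proof. by rewrite /un (unsplitK (inr j)). Qed.

Lemma cabs2 (x : C) : cabs x ^+ 2 = complex.Re x ^+ 2 + complex.Im x ^+ 2.
Proof. by rewrite sqr_sqrtr // addr_ge0 // sqr_ge0. Qed.

Lemma YtY d (z : cvec R d) : (Ymx z)^T *m Ymx z = (cnorm z ^+ 2)%:M.
Proof.
apply/matrixP => k l; rewrite !mxE big_split_ord /=.
rewrite cnorm2; under [X in _ = X *+ _]eq_bigr => j _ do rewrite cabs2.
rewrite -sumrMnl -big_split /=.
apply: eq_bigr => j _; rewrite !mxE !cinner_rbasis ix_l ix_r un_l un_r conjc1 mulr1.
case: (z j) => x y.
case: k => [[|[|k]] hk] //; case: l => [[|[|l]] hl] //=; simpc; ring.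
Qed.

Lemma jac_psiE d (z : cvec R d) : jac_psi z = ((1 + cnorm z ^+ 2) ^+ d.+1)^-1.
Proof.
set A := 1 + cnorm z ^+ 2.
have A0 : 0 < A by rewrite ltr_pwDl // sqr_ge0.
have An : A != 0 by rewrite gt_eqF.
rewrite /jac_psi fs_gramE -/A detZ (@det_rank2 _ _ _ _ _ An (YtY _ z)).
have -> : 1 - A^-1 * cnorm z ^+ 2 = A^-1.
  rewrite /A; field; rewrite -/A //.
rewrite powB // sqrtr_sqr ger0_norm // invr_ge0 exprn_ge0 // ltW //.
Qed.
End Gram.

Section Multi.
Variable F : numFieldType.

Definition fcons d N (t : 'I_N.+1) (a : {ffun 'I_d -> 'I_N.+1}) : {ffun 'I_d.+1 -> 'I_N.+1} :=
  [ffun i => if unlift ord0 i is Some j then a j else t].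
Definition ftail d N (a : {ffun 'I_d.+1 -> 'I_N.+1}) : {ffun 'I_d -> 'I_N.+1} :=
  [ffun j => a (lift ord0 j)].
Arguments fcons {d N}. Arguments ftail {d N}.

Lemma fcons_bij d N :
  bijective (fun p : 'I_N.+1 * {ffun 'I_d -> 'I_N.+1} => fcons p.1 p.2).
Proof.
exists (fun a : {ffun 'I_d.+1 -> 'I_N.+1} => (a ord0, ftail a)).
- move=> [t a] /=; rewrite /fcons /ftail ffunE unlift_none; congr pair.
  by apply/ffunP => j; rewrite !ffunE liftK.
- move=> a /=; apply/ffunP => i; rewrite /fcons ffunE.
  by case: unliftP => [j ->|->]; rewrite ?ffunE.
Qed.

Lemma fcons0 d N t a : @fcons d N t a ord0 = t.
Proof. by rewrite ffunE unlift_none. Qed.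
Lemma fconsS d N t a j : @fcons d N t a (lift ord0 j) = a j.
Proof. by rewrite ffunE liftK. Qed.

Lemma coef_id {M t m P : nat} : (t <= M)%N -> (m <= M - t)%N -> (0 < P)%N ->
  (M`!%:R / ((t`! * P)%:R * (M - (t + m))`!%:R) : F)
  = 'C(M, t)%:R * ((M - t)`!%:R / (P%:R * (M - t - m)`!%:R)).
Proof.
move=> tM mM P0.
rewrite subnDA -(bin_fact tM) !natrM.
have h1 : (t`!%:R : F) != 0 by rewrite pnatr_eq0 -lt0n fact_gt0.
have h2 : ((M - t)`!%:R : F) != 0 by rewrite pnatr_eq0 -lt0n fact_gt0.
have h3 : ((M - t - m)`!%:R : F) != 0 by rewrite pnatr_eq0 -lt0n fact_gt0.
have h4 : (P%:R : F) != 0 by rewrite pnatr_eq0 -lt0n.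
by field; rewrite h1 h3 h4.
Qed.

Lemma multinom d : forall N M (x : 'I_d -> F), (M <= N)%N ->
  \sum_(a : {ffun 'I_d -> 'I_N.+1} | (\sum_(i < d) (a i : nat) <= M)%N)
     (M`!%:R / ((\prod_(i < d) (a i)`!)%:R * (M - \sum_(i < d) (a i : nat))`!%:R))
       * \prod_(i < d) x i ^+ a i
  = (1 + \sum_(i < d) x i) ^+ M.
Proof.
elim: d => [|d IH] N M x MN.
  pose a0 : {ffun 'I_0 -> 'I_N.+1} := [ffun i => ord0].
  rewrite (bigD1 a0) /=; last by rewrite big_ord0.
  rewrite [X in _ + X]big1; last first.
    by move=> a /andP[_ /eqP ha]; exfalso; apply: ha; apply/ffunP => -[].
  rewrite addr0.
  rewrite !big_ord0 subn0 mul1r mulr1 addr0 expr1n divff //.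
  by rewrite pnatr_eq0 -lt0n fact_gt0.
rewrite (reindex _ (onW_bij _ (@fcons_bij d N))) /=.
rewrite big_mkcond -(pair_bigA _ (fun t a =>
  if (\sum_(i < d.+1) (fcons t a i : nat) <= M)%N then
    (M`!%:R / ((\prod_(i < d.+1) (fcons t a i)`!)%:R *
       (M - \sum_(i < d.+1) (fcons t a i : nat))`!%:R)) *
    \prod_(i < d.+1) x i ^+ fcons t a i else 0)) /=.
set S' := \sum_(i < d) x (lift ord0 i).
have inner : forall t : 'I_N.+1,
  \sum_(a : {ffun 'I_d -> 'I_N.+1})
   (if (\sum_(i < d.+1) (fcons t a i : nat) <= M)%N then
    (M`!%:R / ((\prod_(i < d.+1) (fcons t a i)`!)%:R *
       (M - \sum_(i < d.+1) (fcons t a i : nat))`!%:R)) *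
    \prod_(i < d.+1) x i ^+ fcons t a i else 0)
  = if (t <= M)%N then 'C(M, t)%:R * x ord0 ^+ t * (1 + S') ^+ (M - t) else 0.
  move=> t.
  have HS a : \sum_(i < d.+1) (fcons t a i : nat) = (t + \sum_(i < d) (a i : nat))%N.
    by rewrite big_ord_recl fcons0; congr addn; apply: eq_bigr => j _; rewrite fconsS.
  have HP a : \prod_(i < d.+1) (fcons t a i)`! = (t`! * \prod_(i < d) (a i)`!)%N.
    by rewrite big_ord_recl fcons0; congr muln; apply: eq_bigr => j _; rewrite fconsS.
  have HX a : \prod_(i < d.+1) x i ^+ fcons t a i
             = x ord0 ^+ t * \prod_(i < d) x (lift ord0 i) ^+ a i.
    by rewrite big_ord_recl fcons0; congr (_ * _); apply: eq_bigr => j _; rewrite fconsS.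
  case: (leqP t M) => tM.
    have MtN : (M - t <= N)%N by rewrite (leq_trans (leq_subr _ _)).
    rewrite -(IH N (M - t)%N (fun j => x (lift ord0 j)) MtN) mulr_sumr -big_mkcond /=.
    apply: eq_big => [a|a ha]; first by rewrite HS leq_subRL.
    have ha' : (\sum_(i < d) (a i : nat) <= M - t)%N by rewrite leq_subRL // -HS.
    rewrite HS HP HX (coef_id tM ha'); last by rewrite prodn_gt0 // => i; rewrite fact_gt0.
    ring.
  rewrite big1 // => a; rewrite HS ifF //.
  by apply/negbTE; rewrite -ltnNge (leq_trans tM) // leq_addr.
rewrite (eq_bigr _ (fun t _ => inner t)) -big_mkcond /=.
rewrite big_ord_recl -/S'.
have -> : 1 + (x ord0 + S') = (1 + S') + x ord0 by ring.
rewrite exprDn (big_ord_widen N.+1 (fun t : nat => (1 + S') ^+ (M - t) * x ord0 ^+ t *+ 'C(M, t)));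
  last by rewrite ltnS.
apply: eq_big => [i|i _] //.
rewrite -mulr_natl; ring.
Qed.
End Multi.

Section Final.
Context {R : realType}.
Local Notation C := (R[i]).

Lemma sqrtX (s : R) n : 0 <= s -> Num.sqrt (s ^+ n) = Num.sqrt s ^+ n.
Proof.
move=> s0; elim: n => [|n IH]; first by rewrite !expr0 sqrtr1.
by rewrite !exprS sqrtrM // IH.
Qed.

Lemma sqrt_ratio (s : R) d L : 0 < s ->
  Num.sqrt (s ^+ d.+1) / Num.sqrt (s ^+ (d + L + 1)) = (Num.sqrt s ^+ L)^-1.
Proof.
move=> s0; rewrite !sqrtX ?ltW // addn1 -addSn exprD invfM mulrA mulfV ?mul1r //.
by rewrite expf_neq0 // gt_eqF // sqrtr_gt0.
Qed.

Lemma p_decomp {d} {p : cvec R d.+1} : p ord0 != 0 ->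
  forall j, p (lift ord0 j) = p ord0 * psiinv p j.
Proof. by move=> hp j; rewrite /psiinv mulrC divfK. Qed.

Lemma cinner_pq {d} {p q : cvec R d.+1} : p ord0 != 0 -> q ord0 != 0 ->
  cinner p q = p ord0 * conjc (q ord0)
               * (1 + \sum_j psiinv p j * conjc (psiinv q j)).
Proof.
move=> hp hq; rewrite /cinner big_ord_recl mulrDr mulr1; congr (_ + _).
rewrite mulr_sumr; apply: eq_bigr => j _.
rewrite (p_decomp hp) (p_decomp hq) conjcM; ring.
Qed.

Lemma cnorm_p {d} {p : cvec R d.+1} : p ord0 != 0 ->
  cnorm p = cabs (p ord0) * Num.sqrt (1 + cnorm (psiinv p) ^+ 2).
Proof.
move=> hp.
have h : cnorm p ^+ 2 = cabs (p ord0) ^+ 2 * (1 + cnorm (psiinv p) ^+ 2).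
  apply: complexI; rewrite cnorm2C RCM cabs2C RCD RC1 cnorm2C (cinner_pq hp hp).
  by rewrite /cinner.
rewrite -[cnorm p]ger0_norm ?cnorm_ge0 // -sqrtr_sqr h sqrtrM ?sqr_ge0 //.
by rewrite sqrtr_sqr ger0_norm ?cabs_ge0.
Qed.


Lemma phistarE d L (a : mindex d L) (p : cvec R d.+1) :
  phistar a p = (Num.sqrt (Ccoef R a))%:C * \prod_(i < d) psiinv p i ^+ a i
                * ((Num.sqrt (1 + cnorm (psiinv p) ^+ 2) ^+ L)^-1)%:C.
Proof.
rewrite /phistar /phi /jac_psiinv jac_psiE invrK.
set s := 1 + cnorm (psiinv p) ^+ 2.
have s0 : 0 < s by rewrite ltr_pwDl // sqr_ge0.
rewrite ger0_norm ?exprn_ge0 ?ltW //.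
rewrite -(sqrt_ratio _ d L s0) RCM RCV.
ring.
Qed.

Lemma KstarE d L (p q : cvec R d.+1) :
  Kstar L p q =
  (((d + L)`!%:R / (pi ^+ d * L`!%:R)) *
   ((Num.sqrt (1 + cnorm (psiinv p) ^+ 2) ^+ L)^-1 *
    (Num.sqrt (1 + cnorm (psiinv q) ^+ 2) ^+ L)^-1))%:C
  * (1 + \sum_j psiinv p j * conjc (psiinv q j)) ^+ L.
Proof.
rewrite /Kstar.
set c0 := (d + L)`!%:R / (pi ^+ d * L`!%:R).
set Kp := (Num.sqrt (1 + cnorm (psiinv p) ^+ 2) ^+ L)^-1.
set Kq := (Num.sqrt (1 + cnorm (psiinv q) ^+ 2) ^+ L)^-1.
pose y := fun j => psiinv p j * conjc (psiinv q j).
rewrite -(multinom _ d L L y (leqnn L)) mulr_sumr.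
apply: eq_bigr => a _.
rewrite !phistarE !conjcM !conjRC conjc_prod.
have E1 : \prod_i psiinv p i ^+ a i * \prod_i conjc (psiinv q i ^+ a i)
          = \prod_i y i ^+ a i.
  by rewrite -big_split; apply: eq_bigr => i _; rewrite /y conjcX [RHS]exprMn.
have pi0 : (pi : R) != 0 by rewrite gt_eqF // pi_gt0.
have E2 : (Num.sqrt (Ccoef R a))%:C * (Num.sqrt (Ccoef R a))%:C =
    c0%:C * (L`!%:R / ((\prod_(i < d) (a i)`!)%:R * (L - \sum_(i < d) (a i : nat))`!%:R)).
  rewrite -RCM -expr2 sqr_sqrtr; last first.
    by rewrite /Ccoef divr_ge0 // mulr_ge0 // mulr_ge0 // exprn_ge0 // pi_ge0.
  rewrite -!RCn -!RCM -RCV -RCM -(RCM c0); congr (_%:C).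
  rewrite /Ccoef /c0 /msize; field.
  by rewrite expf_neq0 // !pnatr_eq0 -!lt0n !fact_gt0 prodn_gt0 // => i; rewrite fact_gt0.
transitivity ((c0%:C * (L`!%:R / ((\prod_(i < d) (a i)`!)%:R *
     (L - \sum_(i < d) (a i : nat))`!%:R))) * (\prod_i y i ^+ a i) * (Kp%:C * Kq%:C));
  last by rewrite !RCM; ring.
rewrite -E1 -E2; ring.
Qed.
End Final.

Theorem lemma3p2 (R : realType) (d L : nat) (hd : (1 <= d)%N)
    (p q : cvec R d.+1) (hp : p ord0 != 0) (hq : q ord0 != 0) :
  cabs (Kstar L p q)
  = ('C(d + L, d) * d`!)%:R / pi ^+ d
    * cabs (cinner (cscale (cnorm p)^-1%:C p) (cscale (cnorm q)^-1%:C q)) ^+ L.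
Proof.
rewrite KstarE cinnerZl cinnerZr conjRC (cinner_pq hp hq) (cnorm_p hp) (cnorm_p hq).
set sp := Num.sqrt (1 + cnorm (psiinv p) ^+ 2).
set sq := Num.sqrt (1 + cnorm (psiinv q) ^+ 2).
have sp0 : 0 < sp by rewrite sqrtr_gt0 ltr_pwDl // sqr_ge0.
have sq0 : 0 < sq by rewrite sqrtr_gt0 ltr_pwDl // sqr_ge0.
have ap0 : 0 < cabs (p ord0) by rewrite -(@ltcR R) cabsC normr_gt0.
have aq0 : 0 < cabs (q ord0) by rewrite -(@ltcR R) cabsC normr_gt0.
have pi0 : 0 < (pi : R) by exact: pi_gt0.
have L0 : 0 < (L`!%:R : R) by rewrite ltr0n fact_gt0.
rewrite cabsM cabsX cabsR; last first.
  by rewrite mulr_ge0 ?divr_ge0 ?mulr_ge0 ?invr_ge0 ?exprn_ge0 ?ler0n ?ltW.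
rewrite !cabsM cabsJ !cabsR ?invr_ge0 ?mulr_ge0 ?ltW //.
have -> : ('C(d + L, d) * d`!)%:R = ((d + L)`!%:R / L`!%:R : R).
  rewrite -(bin_fact (leq_addr L d)) addKn !natrM mulrA mulfK //.
  by rewrite gt_eqF.
set X := cabs (1 + \sum_j psiinv p j * conjc (psiinv q j)).
have -> : (cabs (p ord0) * sp)^-1 * ((cabs (q ord0) * sq)^-1 *
     (cabs (p ord0) * cabs (q ord0) * X)) = X * (sp * sq)^-1.
  by field; rewrite !gt_eqF.
rewrite exprMn exprVn exprMn.
have u0 : sp ^+ L != 0 by rewrite expf_neq0 // gt_eqF.
have v0 : sq ^+ L != 0 by rewrite expf_neq0 // gt_eqF.
have P0 : (pi : R) ^+ d != 0 by rewrite expf_neq0 // gt_eqF.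
move: u0 v0 P0; set u := sp ^+ L; set v := sq ^+ L; set P := pi ^+ d => u0 v0 P0.
by field; rewrite u0 v0 P0 gt_eqF.
Qed.
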